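(* Let $\mathcal{K}\subseteq\mathbb{R}^d$ be a convex body, $\kappa\in\mathbb{R}^d$, $\nu\in\mathbb{R}$, and let $a_1,\dots,a_\tau\in\mathbb{R}^d$. For $p\in\mathbb{R}^d$ define $u(p,\nu)=\sum_{t=1}^{\tau}\mathbf{1}\{\langle p-\kappa,a_t\rangle+\nu<0\}$, and for an integer $\bar c\ge0$ let $\mathcal{P}(\bar c,\nu)=\{p\in\mathcal{K}:u(p,\nu)\le\bar c\}$. Then every point $p\in\mathrm{conv}(\mathcal{P}(\bar c,\nu))$ satisfies $u(p,\nu)\le\bar c\,(d+1)$.
   Context: In the paper, $a_t=\Pi_{L}x_t$ are projections of contexts onto a subspace $L$, $\kappa$ is the (approximate) centroid of the current knowledge set, and $u(p,\nu)$ is called the $\nu$-margin projected undesirability level of $p$; $\mathrm{conv}$ denotes convex hull. *)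

(* Defs.v *)
From HB Require Import structures.
From mathcomp Require Import all_boot all_order all_algebra.
From mathcomp Require Import all_classical all_reals all_analysis.
Set Implicit Arguments. Unset Strict Implicit. Unset Printing Implicit Defensive.
Import Order.TTheory GRing.Theory Num.Theory.
Import numFieldNormedType.Exports.
Local Open Scope classical_set_scope.
Local Open Scope ring_scope.

Definition dotv (R : realType) (d : nat) (x y : 'rV[R]_d) : R :=
  \sum_(i < d) x 0 i * y 0 i.

Definition convex_set (R : realType) (d : nat) (A : set 'rV[R]_d) : Prop :=
  forall x y (l : R), A x -> A y -> 0 <= l -> l <= 1 -> A (l *: x + (1 - l) *: y).

Definition convex_body (R : realType) (d : nat) (K : set 'rV[R]_d) : Prop :=
  convex_set K /\ compact K /\ (interior K) !=set0.

Definition convex_hull (R : realType) (d : nat) (A : set 'rV[R]_d) : set 'rV[R]_d :=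
  [set p | exists (n : nat) (w : 'I_n -> R) (x : 'I_n -> 'rV[R]_d),
     (forall i, 0 <= w i) /\ \sum_(i < n) w i = 1 /\ (forall i, A (x i)) /\
     p = \sum_(i < n) w i *: x i].

Definition undes (R : realType) (d tau : nat) (kappa : 'rV[R]_d)
  (a : 'I_tau -> 'rV[R]_d) (p : 'rV[R]_d) (nu : R) : nat :=
  \sum_(t < tau) nat_of_bool (dotv (p - kappa) (a t) + nu < 0)%R.

Definition Pset (R : realType) (d tau : nat) (K : set 'rV[R]_d) (kappa : 'rV[R]_d)
  (a : 'I_tau -> 'rV[R]_d) (cbar : nat) (nu : R) : set 'rV[R]_d :=
  [set p | K p /\ (undes kappa a p nu <= cbar)%N].

(* Main.v *)
Require Import Defs.
From HB Require Import structures.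
From mathcomp Require Import all_boot all_order all_algebra.
From mathcomp Require Import all_classical all_reals all_analysis.
Import Order.TTheory GRing.Theory Num.Theory.
Local Open Scope classical_set_scope.
Local Open Scope ring_scope.

Lemma lindep (R : realType) (d n : nat) (x : 'I_n -> 'rV[R]_d) :
  (d.+1 < n)%N -> exists mu : 'I_n -> R,
    (exists i, mu i != 0) /\ \sum_i mu i *: x i = 0 /\ \sum_i mu i = 0.
Proof.
move=> hn.
pose X : 'M[R]_(n, d) := \matrix_(i < n) x i.
pose M := row_mx X (const_mx 1 : 'M[R]_(n,1)).
have : ~~ row_free M.
  apply/negP => /eqP h; have := rank_leq_col M; rewrite h.
  move: hn; rewrite addn1 => hn h2; have := leq_trans hn h2; by rewrite ltnn.
rewrite -kermx_eq0 => /rowV0Pn [v vker v0].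
move: vker; rewrite sub_kermx => /eqP h.
exists (fun i => v 0 i); split.
  apply/existsP; apply: contraR v0; rewrite negb_exists => /forallP H.
  apply/eqP/rowP => j; rewrite mxE; exact/eqP/negPn/H.
have h0 : row_mx (v *m X) (v *m (const_mx 1 : 'M[R]_(n,1))) = row_mx 0 0 by rewrite row_mx0 -mul_mx_row.
have [h1 h2] := eq_row_mx h0.
split.
  by rewrite mulmx_sum_row in h1; move: h1; under eq_bigr do rewrite rowK.
move: h2 => /matrixP /(_ 0 0); rewrite !mxE => h2; rewrite -[in RHS]h2.
by apply: eq_bigr => i _; rewrite mxE mulr1.
Qed.

Lemma carath (R : realType) (d : nat) (P : 'rV[R]_d -> Prop) n
  (w : 'I_n -> R) (x : 'I_n -> 'rV[R]_d) :
  (forall i, 0 <= w i) -> \sum_i w i = 1 -> (forall i, P (x i)) ->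
  exists m (w' : 'I_m -> R) (x' : 'I_m -> 'rV[R]_d),
    (m <= d.+1)%N /\ (forall j, 0 <= w' j) /\ \sum_j w' j = 1 /\
    (forall j, P (x' j)) /\ \sum_i w i *: x i = \sum_j w' j *: x' j.
Proof.
elim: n w x => [|n IH] w x hw hs hP.
  by exists 0%N, w, x.
case: (leqP n.+1 d.+1) => hn; first by exists n.+1, w, x.
have [mu [[i1 hi1] [hmx hm]]] := @lindep R d n.+1 x hn.
have [i2 hi2] : exists i, 0 < mu i.
  case: (pselect (exists i, 0 < mu i)) => // H; exfalso.
  have {}H : forall i, mu i <= 0 by move=> i; rewrite leNgt; apply/negP => hh; apply: H; exists i.
  have h0 : forall i, 0 <= - mu i by move=> i; rewrite oppr_ge0 H.
  have := @psumr_eq0P _ (ordinal n.+1) xpredT (fun i => - mu i) (fun i _ => h0 i).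
  rewrite sumrN hm oppr0 => /(_ erefl i1 isT) /eqP; rewrite oppr_eq0 => /eqP h1.
  by rewrite h1 eqxx in hi1.

case: (@arg_minP _ R _ i2 (fun i => 0 < mu i) (fun i => w i / mu i) hi2) => i0 pos0 min0.
set al := w i0 / mu i0.
pose w' := fun i => w i - al * mu i.
have w'0 : w' i0 = 0.
  by rewrite /w' /al divfK ?subrr // (gt_eqF pos0).
have al0 : 0 <= al by rewrite divr_ge0 // ltW.
have w'ge : forall i, 0 <= w' i.
  move=> i; rewrite /w' subr_ge0; case: (ltP 0 (mu i)) => hmu.
    have := min0 i hmu => /= h.
    rewrite -[leRHS](@divfK _ (mu i)) ?gt_eqF //.
    by rewrite ler_wpM2r // ltW.
  by apply: le_trans (hw i); rewrite mulr_ge0_le0.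
have sw' : \sum_i w' i = 1 by rewrite /w' sumrB -mulr_sumr hm mulr0 subr0.
have sx' : \sum_i w' i *: x i = \sum_i w i *: x i.
  rewrite /w'; under eq_bigr do rewrite scalerBl.
  rewrite sumrB; have -> : \sum_i (al * mu i) *: x i = 0; last by rewrite subr0.
  transitivity (al *: \sum_i mu i *: x i); last by rewrite hmx scaler0.
  by rewrite scaler_sumr; apply: eq_bigr => i _; rewrite scalerA.
rewrite (bigD1_ord i0) //= w'0 add0r in sw'.
rewrite (bigD1_ord i0) //= w'0 scale0r add0r in sx'.
have [m [w2 [x2 [hm2 [hw2 [hs2 [hP2 he2]]]]]]] :=
  IH (fun j => w' (lift i0 j)) (fun j => x (lift i0 j)) (fun j => w'ge _) sw' (fun j => hP _).
exists m, w2, x2; do !split => //.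
by rewrite -sx' he2.
Qed.

Lemma dotv_comb (R : realType) d m (w : 'I_m -> R) (x : 'I_m -> 'rV[R]_d)
  (k y : 'rV[R]_d) (nu : R) : \sum_j w j = 1 ->
  dotv (\sum_j w j *: x j - k) y + nu = \sum_j w j * (dotv (x j - k) y + nu).
Proof.
move=> hs.
under [RHS]eq_bigr do rewrite mulrDr.
rewrite big_split /= -mulr_suml hs mul1r; congr (_ + _).
rewrite /dotv.
under [RHS]eq_bigr do rewrite mulr_sumr.
rewrite exchange_big /=; apply: eq_bigr => i _.
rewrite !mxE summxE; under [RHS]eq_bigr do rewrite !mxE mulrA.
rewrite -mulr_suml; congr (_ * _).
under [RHS]eq_bigr do rewrite mulrBr.
rewrite sumrB -mulr_suml hs mul1r; congr (_ - _).
by apply: eq_bigr => j _; rewrite mxE.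
Qed.

Theorem mainTheorem5 (R : realType) (d tau : nat) (K : set 'rV[R]_d)
  (kappa : 'rV[R]_d) (nu : R) (a : 'I_tau -> 'rV[R]_d) (cbar : nat) :
  convex_body K ->
  forall p : 'rV[R]_d, convex_hull (Pset K kappa a cbar nu) p ->
    (undes kappa a p nu <= cbar * d.+1)%N.
Proof.
move=> _ p [n [w [x [hw [hs [hP ->]]]]]].
have [m [w2 [x2 [hm [hw2 [hs2 [hP2 ->]]]]]]] := @carath R d _ n w x hw hs hP.
rewrite /undes.
apply: (@leq_trans (\sum_(t < tau) \sum_(j < m)
   nat_of_bool (dotv (x2 j - kappa) (a t) + nu < 0)%R)%N).
  apply: leq_sum => t _.
  case h : (_ < 0) => //=.
  have [j hj] : exists j, dotv (x2 j - kappa) (a t) + nu < 0.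
    case: (pselect (exists j, dotv (x2 j - kappa) (a t) + nu < 0)) => // H; exfalso.
    rewrite dotv_comb // in h.
    have : 0 <= \sum_j w2 j * (dotv (x2 j - kappa) (a t) + nu).
      apply: sumr_ge0 => j _; apply: mulr_ge0 => //.
      by rewrite leNgt; apply/negP => hh; apply: H; exists j.
    by rewrite leNgt h.
  by rewrite (bigD1 j) //= hj.
rewrite exchange_big /=.
apply: (@leq_trans (\sum_(j < m) cbar)%N).
  by apply: leq_sum => j _; exact: (hP2 j).2.
by rewrite sum_nat_const card_ord mulnC leq_mul2l hm orbT.
Qed.
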